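(* Consider $\mathbb{C}$ as a Frobenius algebra over $\mathbb{R}$ with the usual multiplication and unit, comultiplication determined by $\Delta(1)=1\otimes 1-i\otimes i$ (and $\Delta(a)=(a\otimes 1)\Delta(1)$), and counit $\varepsilon(1)=1$, $\varepsilon(i)=0$. Then the extended structures on this Frobenius algebra are exactly: (a) $\phi=\mathrm{id}_{\mathbb{C}}$ and $\theta=\pm\sqrt2$; (b) $\phi(z)=\overline z$ (complex conjugation) and $\theta=0$. Moreover, these three extended Frobenius algebras are pairwise non-isomorphic.
   Context: A Frobenius algebra over a field $K$ is a tuple $(A,m,u,\Delta,\varepsilon)$ where $(A,m,u)$ is an associative unital $K$-algebra and $(A,\Delta,\varepsilon)$ is a coassociative counital $K$-coalgebra satisfying $(a\otimes 1_A)\Delta(b)=\Delta(ab)=\Delta(a)(1_A\otimes b)$. A morphism of Frobenius algebras is both an algebra and coalgebra morphism. An extended structure on $A$ is a pair $(\phi,\theta)$, $\phi:A\to A$ $K$-linear, $\theta\in A$, with: (i) $\phi$ a Frobenius algebra morphism with $\phi^2=\mathrm{id}_A$; (ii) $\phi(\theta a)=\theta a$ for all $a\in A$; (iii) $m(\phi\otimes\mathrm{id}_A)\Delta(1_A)=\theta^2$. A morphism of extended Frobenius algebras $f:(A,\phi_A,\theta_A)\to(B,\phi_B,\theta_B)$ is a Frobenius algebra morphism with $f\phi_A=\phi_Bf$ and $f(\theta_A)=\theta_B$. *)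

(* Defs.v *)
From HB Require Import structures.
From mathcomp Require Import all_boot all_order all_algebra.
From mathcomp Require Import complex.
From mathcomp Require Import reals.
Set Implicit Arguments. Unset Strict Implicit. Unset Printing Implicit Defensive.
Import Order.TTheory GRing.Theory Num.Theory.
Local Open Scope ring_scope.
Local Open Scope complex_scope.

(* The real numbers are modelled by an arbitrary R : realType (complete
   archimedean ordered field, i.e. the reals), and C = R[i]. *)
Section FrobC.
Variable R : realType.
Local Notation C := R[i].

Definition cbasis (j : 'I_2) : C := if j == ord0 then 1 else 'i.
Definition ccoord (j : 'I_2) (z : C) : R := if j == ord0 then complex.Re z else complex.Im z.

(* C (x)_R C is modelled by 2x2 real matrices: T = sum_{j,k} T j k e_j (x) e_k *)
Definition tensC := 'M[R]_2.
Definition tens (x y : C) : tensC := \matrix_(j, k) (ccoord j x * ccoord k y).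

Definition mC (T : tensC) : C :=
  \sum_(j < 2) \sum_(k < 2) (T j k)%:C * (cbasis j * cbasis k).

Definition tmap (f g : C -> C) (T : tensC) : tensC :=
  \sum_(j < 2) \sum_(k < 2) T j k *: tens (f (cbasis j)) (g (cbasis k)).

(* comultiplication: Delta(a) = (a (x) 1) Delta(1), Delta(1) = 1(x)1 - i(x)i *)
Definition DeltaC (a : C) : tensC := tens a 1 - tens (a * 'i) 'i.
(* counit: eps(1) = 1, eps(i) = 0 *)
Definition epsC (z : C) : R := complex.Re z.

Definition Rlinear (f : C -> C) : Prop :=
  forall (r : R) (x y : C), f (r%:C * x + y) = r%:C * f x + f y.

Definition frob_morph (f : C -> C) : Prop :=
  [/\ Rlinear f,
      f 1 = 1,
      (forall x y, f (x * y) = f x * f y),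
      (forall a, DeltaC (f a) = tmap f f (DeltaC a)) &
      (forall a, epsC (f a) = epsC a)].

Definition ext_structure (phi : C -> C) (theta : C) : Prop :=
  [/\ frob_morph phi,
      (forall a, phi (phi a) = a),
      (forall a, phi (theta * a) = theta * a) &
      mC (tmap phi id (DeltaC 1)) = theta ^+ 2].

Definition ext_morph (phi1 : C -> C) (theta1 : C) (phi2 : C -> C) (theta2 : C)
    (f : C -> C) : Prop :=
  [/\ frob_morph f, (forall a, f (phi1 a) = phi2 (f a)) & f theta1 = theta2].

Definition ext_iso (phi1 : C -> C) (theta1 : C) (phi2 : C -> C) (theta2 : C) : Prop :=
  exists f g, [/\ ext_morph phi1 theta1 phi2 theta2 f,
                  ext_morph phi2 theta2 phi1 theta1 g,
                  (forall a, g (f a) = a) & (forall b, f (g b) = b)].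
End FrobC.

(* Main.v *)
Require Import Defs.
From HB Require Import structures.
From mathcomp Require Import all_boot all_order all_algebra.
From mathcomp Require Import complex.
From mathcomp Require Import reals.
From mathcomp Require Import ring lra.
From Stdlib Require Import FunctionalExtensionality.
Import Order.TTheory GRing.Theory Num.Theory.
Local Open Scope ring_scope.
Local Open Scope complex_scope.

Lemma mC_lem (R : realType) (phi : R[i] -> R[i]) (p1 p2 : R) :
  phi 1 = 1 -> phi 'i = Complex p1 p2 ->
  mC (tmap phi id (DeltaC 1)) = Complex (1 + p2) (- p1).
Proof.
move=> h1 hi.
rewrite /mC /tmap.
rewrite !big_ord_recl !big_ord0.
rewrite /DeltaC /tens /cbasis /ccoord /= !mxE /=.
rewrite h1 hi.
apply/eqP; rewrite eq_complex /=; apply/andP; split; apply/eqP; ring.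
Qed.

Lemma lin0 (R : realType) (f : R[i] -> R[i]) : Rlinear f -> f 0 = 0.
Proof.
move=> hf; have h := hf 1 0 0; rewrite mulr0 addr0 in h.
have e : (1%:C : R[i]) = 1 by [].
rewrite e mul1r -{1}[f 0]addr0 in h.
by move/addrI: h => <-.
Qed.

Lemma linC (R : realType) (f : R[i] -> R[i]) (r : R) :
  Rlinear f -> f 1 = 1 -> f r%:C = r%:C.
Proof.
move=> hf h1; have := hf r 1 0; rewrite addr0 mulr1 h1 (@lin0 _ _ hf) addr0 mulr1.
by [].
Qed.

Lemma conj_frob (R : realType) : frob_morph (@conjc R).
Proof.
split.
- move=> r [x1 x2] [y1 y2]; apply/eqP; rewrite eq_complex /=; apply/andP; split; apply/eqP; ring.
- by apply/eqP; rewrite eq_complex /= oppr0 !eqxx.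
- move=> [x1 x2] [y1 y2]; apply/eqP; rewrite eq_complex /=; apply/andP; split; apply/eqP; ring.
- move=> [a1 a2]; apply/matrixP=> j k.
  rewrite /tmap !big_ord_recl !big_ord0 /DeltaC /tens /cbasis /ccoord !mxE /=.
  case: j => [[|[|j]] hj] //=; case: k => [[|[|k]] hk] //=; ring.
- by move=> [a1 a2].
Qed.

Lemma id_frob (R : realType) : frob_morph (@id R[i]).
Proof.
split => //.
move=> [a1 a2]; apply/matrixP=> j k.
rewrite /tmap !big_ord_recl !big_ord0 /DeltaC /tens /cbasis /ccoord !mxE /=.
case: j => [[|[|j]] hj] //=; case: k => [[|[|k]] hk] //=; ring.
Qed.

Lemma sq2 (R : realType) (t : R) : t ^+ 2 = 2 -> t = Num.sqrt 2 \/ t = - Num.sqrt 2.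
Proof.
move=> ht.
have hs : Num.sqrt (2:R) ^+ 2 = 2 by rewrite sqr_sqrtr // ler0n.
have : (t - Num.sqrt 2) * (t + Num.sqrt 2) = 0.
  by rewrite mulrBl !mulrDr -!expr2 ht hs; ring.
by move/eqP; rewrite mulf_eq0 subr_eq0 addr_eq0 => /orP[]/eqP; [left|right].
Qed.

Lemma struct_fwd (R : realType) (phi : R[i] -> R[i]) (theta : R[i]) :
  ext_structure phi theta ->
     ((forall z, phi z = z) /\
        (theta = (Num.sqrt (2 : R))%:C \/ theta = - (Num.sqrt (2 : R))%:C))
     \/ ((forall z, phi z = z^*) /\ theta = 0).
Proof.
move=> [[hl h1 hm _ _] _ _ hth].
case hp: (phi 'i) => [p1 p2].
have hz : forall z1 z2, phi (Complex z1 z2) = z1%:C + z2%:C * Complex p1 p2.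
  move=> z1 z2; have := hl z1 1 (z2%:C * 'i + 0).
  rewrite [X in _ = _ + X]hl h1 (@lin0 _ _ hl) hp !mulr1 !addr0 => <-; congr phi.
  by apply/eqP; rewrite eq_complex /=; apply/andP; split; apply/eqP; ring.
have hsq : Complex p1 p2 * Complex p1 p2 = -1.
  rewrite -hp -hm.
  have -> : ('i * 'i : R[i]) = (-1)%:C * 1 + 0.
    by apply/eqP; rewrite eq_complex /=; apply/andP; split; apply/eqP; ring.
  rewrite hl h1 (@lin0 _ _ hl) addr0 mulr1.
  by apply/eqP; rewrite eq_complex /=; apply/andP; split; apply/eqP; ring.
move/eqP: hsq; rewrite eq_complex /= => /andP[/eqP e1 /eqP e2].
have p10 : p1 = 0 by nra.
have : (p2 - 1) * (p2 + 1) = 0 by rewrite p10 in e1; nra.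
move/eqP; rewrite mulf_eq0 subr_eq0 addr_eq0 => /orP[]/eqP hp2.
- left; split.
    by move=> [z1 z2]; rewrite hz p10 hp2; apply/eqP; rewrite eq_complex /=; apply/andP; split; apply/eqP; ring.
  move: hth; rewrite (@mC_lem _ _ _ _ h1 hp) p10 hp2.
  case: theta => t1 t2 /eqP; rewrite eq_complex /= => /andP[/eqP f1 /eqP f2].
  have h3 : t1 * t2 = 0 by lra.
  have h4 : (t2 * t2) * (2 + t2 * t2) = 0.
    have -> : 2 + t2 * t2 = t1 * t1 by lra.
    have -> : t2 * t2 * (t1 * t1) = (t1 * t2) * (t1 * t2) by ring.
    by rewrite h3 mul0r.
  have t20 : t2 = 0.
    move/eqP: h4; rewrite mulf_eq0 => /orP[]; first by rewrite mulf_eq0 orbb => /eqP.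
    move=> /eqP h5; nra.
  have : t1 ^+ 2 = 2 by rewrite t20 in f1; rewrite expr2; lra.
  move/sq2 => [] ->; [left|right]; rewrite t20;
    by apply/eqP; rewrite eq_complex /= ?oppr0 !eqxx.
- right; split.
    by move=> [z1 z2]; rewrite hz p10 hp2; apply/eqP; rewrite eq_complex /=; apply/andP; split; apply/eqP; ring.
  move: hth; rewrite (@mC_lem _ _ _ _ h1 hp) p10 hp2.
  case: theta => t1 t2 /eqP; rewrite eq_complex /= => /andP[/eqP f1 /eqP f2].
  have h3 : t1 * t2 = 0 by lra.
  have h4 : (t1 * t1) * (t1 * t1) = 0.
    have {2}-> : t1 * t1 = t2 * t2 by lra.
    have -> : t1 * t1 * (t2 * t2) = (t1 * t2) * (t1 * t2) by ring.
    by rewrite h3 mul0r.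
  have t10 : t1 = 0.
    by move/eqP: h4; rewrite mulf_eq0 orbb mulf_eq0 orbb => /eqP.
  have t20 : t2 = 0 by rewrite t10 in f1; nra.
  by rewrite t10 t20.
Qed.

Lemma noiso (R : realType) (phi2 : R[i] -> R[i]) (t : R[i]) :
  t <> (Num.sqrt (2:R))%:C -> ~ ext_iso id (Num.sqrt (2 : R))%:C phi2 t.
Proof.
move=> ht [f [g [[[hl h1 _ _ _] _ hf] _ _ _]]].
by apply: ht; rewrite -hf linC.
Qed.

Lemma sqrt2C_neq (R : realType) :
  ((Num.sqrt (2:R))%:C <> 0) /\ ((Num.sqrt (2:R))%:C <> - (Num.sqrt (2:R))%:C).
Proof.
have hp : 0 < Num.sqrt (2:R) by rewrite sqrtr_gt0 ltr0n.
split.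
- move/eqP; rewrite eq_complex /= => /andP[/eqP h _]; lra.
- move/eqP; rewrite eq_complex /= => /andP[/eqP h _]; lra.
Qed.

Theorem mainTheorem3 (R : realType) :
  (forall (phi : R[i] -> R[i]) (theta : R[i]),
     ext_structure phi theta <->
     ((forall z, phi z = z) /\
        (theta = (Num.sqrt (2 : R))%:C \/ theta = - (Num.sqrt (2 : R))%:C))
     \/ ((forall z, phi z = z^*) /\ theta = 0))
  /\ ~ ext_iso id (Num.sqrt (2 : R))%:C id (- (Num.sqrt (2 : R))%:C)
  /\ ~ ext_iso id (Num.sqrt (2 : R))%:C (@conjc R) 0
  /\ ~ ext_iso id (- (Num.sqrt (2 : R))%:C) (@conjc R) 0.
Proof.
have [n0 nm] := sqrt2C_neq R.
split; last split; last split.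
- move=> phi theta; split; first exact: struct_fwd.
  have hs : Num.sqrt (2:R) ^+ 2 = 2 by rewrite sqr_sqrtr // ler0n.
  case=> [[hphi hth]|[hphi ->]].
  + have -> : phi = id by apply: functional_extensionality.
    split => //; first exact: id_frob.
    rewrite (@mC_lem _ _ 0 1 erefl erefl).
    case: hth => ->; apply/eqP; rewrite eq_complex /=; apply/andP; split; apply/eqP.
    * rewrite expr2 in hs; nra.
    * ring.
    * rewrite expr2 in hs; nra.
    * ring.
  + have -> : phi = @conjc R by apply: functional_extensionality.
    split => //; first exact: conj_frob.
    * by move=> [a1 a2]; rewrite /= !opprK.
    * by move=> a; rewrite !mul0r; apply/eqP; rewrite eq_complex /= oppr0 !eqxx.
    * rewrite (@mC_lem _ _ 0 (-1)) //; last by apply/eqP; rewrite eq_complex /= oppr0 !eqxx.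
      apply/eqP; rewrite eq_complex /=; apply/andP; split; apply/eqP; ring.
- by apply: noiso => h; apply: nm; rewrite h.
- by apply: noiso => h; apply: n0; rewrite h.
- move=> [f [g [[[hl h1 _ _ _] _ hf] _ _ _]]].
  have e : - (Num.sqrt (2:R))%:C = (- Num.sqrt (2:R))%:C.
    by apply/eqP; rewrite eq_complex /= oppr0 !eqxx.
  move: hf; rewrite e linC // => /eqP; rewrite eq_complex /= => /andP[/eqP h _].
  have hp : 0 < Num.sqrt (2:R) by rewrite sqrtr_gt0 ltr0n.
  by move: hp; rewrite -oppr_lt0 h ltxx.
Qed.
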